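(* Let $G$ be a group and $H\subseteq G$ a maximal subgroup which is non-abelian simple, of finite index $p=[G:H]$, and suppose $G$ contains an element of order $p$. If the inclusion $H\subseteq G$ is a localization, then $G$ is simple.
   Context: A group homomorphism $i\colon H\to G$ is a localization if for every homomorphism $\varphi\colon H\to G$ there exists a unique homomorphism $\psi\colon G\to G$ with $\psi\circ i=\varphi$; for $H\subseteq G$, ''$H\subseteq G$ is a localization'' means the inclusion map is. *)

(* Defs.v *)
From Stdlib Require Import Arith.

Record Group := {
  car :> Type;
  gmul : car -> car -> car;
  gone : car;
  ginv : car -> car;
  gmulA : forall x y z, gmul x (gmul y z) = gmul (gmul x y) z;
  gmul1l : forall x, gmul gone x = x;
  gmul1r : forall x, gmul x gone = x;
  gmulVl : forall x, gmul (ginv x) x = gone;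
  gmulVr : forall x, gmul x (ginv x) = gone
}.

Arguments gmul {_} x y.
Arguments gone {_}.
Arguments ginv {_} x.

Fixpoint gpow {G : Group} (x : G) (n : nat) : G :=
  match n with O => gone | S m => gmul x (gpow x m) end.

Definition is_subgroup {G : Group} (S : G -> Prop) : Prop :=
  S gone /\ (forall x y, S x -> S y -> S (gmul x y)) /\ (forall x, S x -> S (ginv x)).

Definition normal_in {G : Group} (N K : G -> Prop) : Prop :=
  is_subgroup N /\ (forall x, N x -> K x) /\
  (forall k n, K k -> N n -> N (gmul (gmul k n) (ginv k))).

Definition simple_sub {G : Group} (K : G -> Prop) : Prop :=
  is_subgroup K /\ (exists x, K x /\ x <> gone) /\
  forall N, normal_in N K -> (forall x, N x -> x = gone) \/ (forall x, K x -> N x).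

Definition nonabelian_sub {G : Group} (K : G -> Prop) : Prop :=
  exists x y, K x /\ K y /\ gmul x y <> gmul y x.

Definition simple_group (G : Group) : Prop := simple_sub (fun _ : G => True).

Definition maximal_sub {G : Group} (H : G -> Prop) : Prop :=
  is_subgroup H /\ (exists g, ~ H g) /\
  forall K, is_subgroup K -> (forall x, H x -> K x) ->
    (forall x, K x -> H x) \/ (forall x, K x).

(* [G:H] = p : there are p left-coset representatives r 0, ..., r (p-1)
   whose cosets r i H are pairwise distinct and cover G. *)
Definition has_index {G : Group} (H : G -> Prop) (p : nat) : Prop :=
  exists r : nat -> G,
    (forall g, exists i, i < p /\ H (gmul (ginv (r i)) g)) /\
    (forall i j, i < p -> j < p -> H (gmul (ginv (r i)) (r j)) -> i = j).

Definition has_order {G : Group} (x : G) (p : nat) : Prop :=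
  0 < p /\ gpow x p = gone /\ (forall k, 0 < k -> k < p -> gpow x k <> gone).

(* Group homomorphism from the subgroup H into G, represented by a function
   G -> G whose values off H are irrelevant. *)
Definition hom_on {G : Group} (H : G -> Prop) (f : G -> G) : Prop :=
  forall x y, H x -> H y -> f (gmul x y) = gmul (f x) (f y).

Definition endo {G : Group} (f : G -> G) : Prop := hom_on (fun _ => True) f.

Definition localization {G : Group} (H : G -> Prop) : Prop :=
  forall phi : G -> G, hom_on H phi ->
    (exists psi, endo psi /\ forall x, H x -> psi x = phi x) /\
    (forall psi1 psi2, endo psi1 -> endo psi2 ->
       (forall x, H x -> psi1 x = phi x) -> (forall x, H x -> psi2 x = phi x) ->
       forall g, psi1 g = psi2 g).

(* Main.v *)
Require Import Defs.
From Stdlib Require Import Arith Lia Classical ClassicalEpsilon Wf_nat.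

Infix "**" := gmul (at level 40, left associativity).

Lemma mulKl {G : Group} (a x y : G) : a ** x = a ** y -> x = y.
Proof. intro E. apply (f_equal (fun z => ginv a ** z)) in E.
  rewrite !gmulA, !gmulVl, !gmul1l in E; exact E. Qed.
Lemma mulKr {G : Group} (a x y : G) : x ** a = y ** a -> x = y.
Proof. intro E. apply (f_equal (fun z => z ** ginv a)) in E.
  rewrite <- !gmulA, !gmulVr, !gmul1r in E; exact E. Qed.
Lemma inv_uniq {G : Group} (x y : G) : x ** y = gone -> y = ginv x.
Proof. intro E. apply (mulKl x). rewrite E, gmulVr. reflexivity. Qed.
Lemma inv_inv {G : Group} (x : G) : ginv (ginv x) = x.
Proof. symmetry. apply inv_uniq. apply gmulVl. Qed.
Lemma inv_mul {G : Group} (x y : G) : ginv (x ** y) = ginv y ** ginv x.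
Proof. symmetry. apply inv_uniq. rewrite <- gmulA, (gmulA _ y), gmulVr, gmul1l, gmulVr. reflexivity. Qed.
Lemma inv_one {G : Group} : ginv (@gone G) = gone.
Proof. symmetry. apply inv_uniq. apply gmul1l. Qed.

Lemma gpow_add {G : Group} (x : G) a b : gpow x (a + b) = gpow x a ** gpow x b.
Proof. induction a; simpl. now rewrite gmul1l. now rewrite IHa, gmulA. Qed.
Lemma gpow_mul {G : Group} (x : G) a b : gpow x (a * b) = gpow (gpow x b) a.
Proof. induction a; simpl. reflexivity. now rewrite gpow_add, IHa. Qed.
Lemma gpow_one {G : Group} a : gpow (@gone G) a = gone.
Proof. induction a; simpl. reflexivity. now rewrite IHa, gmul1l. Qed.
Lemma gpow1 {G : Group} (x : G) : gpow x 1 = x.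
Proof. simpl. apply gmul1r. Qed.
Lemma sub_pow {G : Group} (H : G -> Prop) z n : is_subgroup H -> H z -> H (gpow z n).
Proof. intros [H1 [HM HI]] Hz. induction n; simpl; auto. Qed.

Lemma coset_same {G : Group} (H : G -> Prop) (u y1 y2 : G) : is_subgroup H ->
  H (ginv u ** y1) -> H (ginv u ** y2) -> H (ginv y1 ** y2).
Proof. intros [H1 [HM HI]] A B.
  replace (ginv y1 ** y2) with (ginv (ginv u ** y1) ** (ginv u ** y2)); auto.
  rewrite inv_mul, inv_inv, <- gmulA, (gmulA _ u), gmulVr, gmul1l. reflexivity. Qed.

Lemma php : forall a b (f : nat -> nat), (forall i, i < a -> f i < b) ->
  (forall i j, i < a -> j < a -> f i = f j -> i = j) -> a <= b.
Proof.
  induction a; intros b f Hr Hi. lia.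
  destruct b as [|b]. specialize (Hr a ltac:(lia)). lia.
  set (c := f a).
  apply le_n_S. apply (IHa b (fun i => if Nat.eqb (f i) b then c else f i)).
  - intros i Hia. destruct (Nat.eqb_spec (f i) b).
    + assert (c <> b). { intro E. assert (i = a) by (apply Hi; lia). lia. }
      assert (c < S b) by (apply Hr; lia). lia.
    + assert (f i < S b) by (apply Hr; lia). lia.
  - intros i j Hia Hja E.
    destruct (Nat.eqb_spec (f i) b), (Nat.eqb_spec (f j) b).
    + apply Hi; lia.
    + assert (a = j) by (apply Hi; lia). lia.
    + assert (i = a) by (apply Hi; lia). lia.
    + apply Hi; lia.
Qed.

Lemma split_uniq {G : Group} (H N : G -> Prop) a1 b1 a2 b2 : is_subgroup H -> is_subgroup N ->
  (forall y, N y -> H y -> y = gone) -> N a1 -> N a2 -> H b1 -> H b2 ->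
  a1 ** b1 = a2 ** b2 -> b1 = b2.
Proof.
  intros [H1 [HM HI]] [N1 [NM NI]] Htr A1 A2 B1 B2 E.
  apply (f_equal (fun z => ginv a2 ** z ** ginv b1)) in E.
  rewrite !gmulA in E. rewrite <- (gmulA _ _ b1 (ginv b1)), gmulVr, gmul1r, gmulVl, gmul1l in E.
  assert (Z : b2 ** ginv b1 = gone).
  { rewrite <- E. apply Htr; [|rewrite E]; auto. }
  apply inv_uniq in Z. rewrite <- (inv_inv b1), Z, inv_inv. reflexivity.
Qed.

Lemma caseA {G : Group} (H N : G -> Prop) : is_subgroup H -> normal_in N (fun _ => True) ->
  (forall y, N y -> H y -> y = gone) -> (exists n, N n /\ n <> gone) ->
  maximal_sub H -> localization H -> False.
Proof.
  intros HS [NS [_ Nc]] Htr [n [Nn nne]] [_ [_ Hmax]] Hloc.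
  pose proof HS as [H1 [HM HI]]. pose proof NS as [N1 [NM NI]].
  set (K := fun y : G => exists b, H b /\ exists a, N a /\ y = a ** b).
  assert (KS : is_subgroup K).
  { split; [|split].
    - exists gone. split; auto. exists gone. split; auto. symmetry; apply gmul1l.
    - intros y1 y2 [b1 [B1 [a1 [A1 ->]]]] [b2 [B2 [a2 [A2 ->]]]].
      exists (b1 ** b2). split; auto. exists (a1 ** (b1 ** a2 ** ginv b1)). split.
      + apply NM; auto.
      + rewrite !gmulA. rewrite <- (gmulA _ _ (ginv b1) b1), gmulVl, gmul1r. reflexivity.
    - intros y [b [B [a [A ->]]]]. exists (ginv b). split; auto.
      exists (ginv b ** ginv a ** ginv (ginv b)). split.
      + apply Nc; auto.
      + rewrite inv_mul, inv_inv, <- gmulA, gmulVr, gmul1r. reflexivity. }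
  destruct (Hmax K KS) as [Hc | Hall].
  - intros y Hy. exists y. split; auto. exists gone. split; auto. symmetry; apply gmul1l.
  - apply nne. apply Htr; auto. apply Hc. exists gone. split; auto. exists n. split; auto.
    symmetry; apply gmul1r.
  - set (bf := fun y => proj1_sig (constructive_indefinite_description _ (Hall y))).
    assert (Hbf : forall y, H (bf y) /\ exists a, N a /\ y = a ** bf y).
    { intro y. unfold bf. destruct (constructive_indefinite_description _ (Hall y)). exact a. }
    assert (Hb : forall y a b, N a -> H b -> y = a ** b -> bf y = b).
    { intros y a b A B ->. destruct (Hbf (a ** b)) as [B' [a' [A' E]]].
      symmetry. apply (split_uniq H N a b a' (bf (a ** b))); auto. }
    assert (endo bf).
    { intros y1 y2 _ _. destruct (Hbf y1) as [B1 [a1 [A1 E1]]]. destruct (Hbf y2) as [B2 [a2 [A2 E2]]].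
      apply (Hb _ (a1 ** (bf y1 ** a2 ** ginv (bf y1)))); auto.
      rewrite E1 at 1. rewrite E2 at 1.
      rewrite !gmulA. rewrite <- (gmulA _ _ (ginv (bf y1)) (bf y1)), gmulVl, gmul1r. reflexivity. }
    destruct (Hloc (fun y => y)) as [_ U].
    { intros x y _ _. reflexivity. }
    assert (E := U bf (fun y => y) H0 (fun _ _ _ _ => eq_refl)
      (fun x Hx => Hb x gone x N1 Hx (eq_sym (gmul1l _ x))) (fun _ _ => eq_refl) n).
    apply nne. rewrite <- E. apply (Hb n n gone); auto. symmetry; apply gmul1r.
Qed.

Lemma pow_diff {G : Group} (g : G) a d : ginv (gpow g a) ** gpow g (a + d) = gpow g d.
Proof. rewrite gpow_add, gmulA, gmulVl, gmul1l. reflexivity. Qed.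

Lemma pow_coset {G : Group} (H : G -> Prop) (g : G) i j :
  H (ginv (gpow g i) ** gpow g j) -> i < j -> H (gpow g (j - i)).
Proof. intros Hh Lt. replace j with (i + (j - i)) in Hh by lia. rewrite pow_diff in Hh. exact Hh. Qed.

Lemma caseB {G : Group} (H : G -> Prop) p (x : G) : is_subgroup H ->
  (forall g h, H h -> H (g ** h ** ginv g)) -> maximal_sub H -> has_index H p ->
  has_order x p -> localization H -> False.
Proof.
  intros HS Hn [_ [[g Hg] Hmax]] [r [Hcov Hdis]] [Hp0 [Hxp Hxo]] Hloc.
  pose proof HS as [H1 [HM HI]].
  set (c := fun y => proj1_sig (constructive_indefinite_description _ (Hcov y))).
  assert (Hc : forall y, c y < p /\ H (ginv (r (c y)) ** y)).
  { intro y. unfold c. destruct (constructive_indefinite_description _ (Hcov y)). exact a. }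
  assert (Ex : exists k, 0 < k /\ H (gpow g k)).
  { apply NNPP. intro NE.
    assert (S p <= p); [|lia].
    apply (php (S p) p (fun i => c (gpow g i))).
    - intros i _. apply Hc.
    - intros i j _ _ E.
      assert (A : H (ginv (gpow g i) ** gpow g j)).
      { apply (coset_same H (r (c (gpow g i)))); auto. apply Hc. rewrite E. apply Hc. }
      assert (B : H (ginv (gpow g j) ** gpow g i)).
      { apply (coset_same H (r (c (gpow g i)))); auto. rewrite E. apply Hc. apply Hc. }
      destruct (lt_eq_lt_dec i j) as [[L|L]|L]; auto.
      + exfalso. apply NE. exists (j - i). split. lia. apply (pow_coset H g i j); auto.
      + exfalso. apply NE. exists (i - j). split. lia. apply (pow_coset H g j i); auto. }
  destruct (dec_inh_nat_subset_has_unique_least_element (fun k => 0 < k /\ H (gpow g k))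
     (fun n => classic _) Ex) as [m [[[Hm0 Hmm] Mmin] _]].
  assert (Hm2 : 2 <= m).
  { destruct (Nat.eq_dec m 1) as [->|]; [|lia]. rewrite gpow1 in Hmm. contradiction. }
  assert (HmP : forall q, H (gpow g (q * m))).
  { intro q. rewrite gpow_mul. apply sub_pow; auto. }
  assert (Hdivm : forall k, H (gpow g k) -> k = (k / m) * m).
  { intros k Hk. pose proof (Nat.div_mod_eq k m). pose proof (Nat.mod_upper_bound k m ltac:(lia)).
    destruct (Nat.eq_dec (k mod m) 0) as [E|NE]; [lia|].
    exfalso. assert (m <= k mod m); [|lia]. apply Mmin. split. lia.
    replace k with ((k / m) * m + k mod m) in Hk by lia.
    rewrite gpow_add in Hk.
    replace (gpow g (k mod m)) with (ginv (gpow g (k / m * m)) ** (gpow g (k / m * m) ** gpow g (k mod m))).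
    apply HM; auto. rewrite gmulA, gmulVl, gmul1l. reflexivity. }
  assert (prodK : forall i1 i2 y1 y2, H (ginv (gpow g i1) ** y1) -> H (ginv (gpow g i2) ** y2) ->
     H (ginv (gpow g (i1 + i2)) ** (y1 ** y2))).
  { intros i1 i2 y1 y2 A B.
    replace (ginv (gpow g (i1 + i2)) ** (y1 ** y2)) with
      ((ginv (gpow g i2) ** (ginv (gpow g i1) ** y1) ** ginv (ginv (gpow g i2))) ** (ginv (gpow g i2) ** y2)).
    apply HM; auto.
    rewrite inv_inv, gpow_add, inv_mul, !gmulA.
    rewrite <- (gmulA _ _ (gpow g i2) (ginv (gpow g i2))), gmulVr, gmul1r. reflexivity. }
  set (K := fun y => exists i, H (ginv (gpow g i) ** y)).
  assert (KS : is_subgroup K).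
  { split; [|split].
    - exists 0. simpl. rewrite inv_one, gmul1l. auto.
    - intros y1 y2 [i1 A] [i2 B]. exists (i1 + i2). auto.
    - intros y [i A]. exists (i * (m - 1)).
      replace (ginv (gpow g (i * (m - 1))) ** ginv y) with
        ((ginv (gpow g (i * (m - 1))) ** (ginv y ** gpow g i) ** ginv (ginv (gpow g (i * (m - 1)))))
          ** ginv (gpow g (i + i * (m - 1)))).
      + apply HM. apply Hn. replace (ginv y ** gpow g i) with (ginv (ginv (gpow g i) ** y)). auto.
        rewrite inv_mul, inv_inv. reflexivity.
        apply HI. replace (i + i * (m - 1)) with (i * m) by nia. auto.
      + rewrite inv_inv, gpow_add, inv_mul, !gmulA.
        rewrite <- (gmulA _ _ (gpow g (i * (m-1))) (ginv (gpow g (i * (m-1))))), gmulVr, gmul1r.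
        rewrite <- (gmulA _ _ (gpow g i) (ginv (gpow g i))), gmulVr, gmul1r. reflexivity. }
  destruct (Hmax K KS) as [Hc' | Hall].
  - intros y Hy. exists 0. simpl. rewrite inv_one, gmul1l. auto.
  - exfalso. apply Hg. apply Hc'. exists 1. rewrite gpow1, gmulVl. auto.
  - assert (coverlt : forall y, exists j, j < m /\ H (ginv (gpow g j) ** y)).
    { intro y. destruct (Hall y) as [k Hk]. exists (k mod m). split. apply Nat.mod_upper_bound; lia.
      pose proof (Nat.div_mod_eq k m).
      replace k with (k mod m + (k / m) * m) in Hk by lia.
      rewrite gpow_add, inv_mul, <- gmulA in Hk.
      replace (ginv (gpow g (k mod m)) ** y) with
        (gpow g (k / m * m) ** (ginv (gpow g (k / m * m)) ** (ginv (gpow g (k mod m)) ** y))).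
      apply HM; auto. rewrite gmulA, gmulVr, gmul1l. reflexivity. }
    set (dj := fun y => proj1_sig (constructive_indefinite_description _ (coverlt y))).
    assert (Hdj : forall y, dj y < m /\ H (ginv (gpow g (dj y)) ** y)).
    { intro y. unfold dj. destruct (constructive_indefinite_description _ (coverlt y)). exact a. }
    assert (Hpm : p <= m).
    { apply (php p m (fun i => dj (r i))).
      - intros i _. apply Hdj.
      - intros i j Hi Hj E. apply Hdis; auto.
        apply (coset_same H (gpow g (dj (r i)))); auto. apply Hdj. rewrite E. apply Hdj. }
    assert (Hmp : m <= p).
    { apply (php m p (fun i => c (gpow g i))).
      - intros i _. apply Hc.
      - intros i j Hi Hj E.
        assert (A : H (ginv (gpow g i) ** gpow g j)).
        { apply (coset_same H (r (c (gpow g i)))); auto. apply Hc. rewrite E. apply Hc. }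
        assert (B : H (ginv (gpow g j) ** gpow g i)).
        { apply (coset_same H (r (c (gpow g i)))); auto. rewrite E. apply Hc. apply Hc. }
        destruct (lt_eq_lt_dec i j) as [[L|L]|L]; auto.
        + exfalso. assert (m <= j - i); [|lia]. apply Mmin. split. lia. apply (pow_coset H g i j); auto.
        + exfalso. assert (m <= i - j); [|lia]. apply Mmin. split. lia. apply (pow_coset H g j i); auto. }
    assert (Epm : p = m) by lia. subst p.
    assert (wd0 : forall a b y, a <= b -> H (ginv (gpow g a) ** y) -> H (ginv (gpow g b) ** y) ->
       gpow x a = gpow x b).
    { intros a b y L A B. assert (C : H (ginv (gpow g a) ** gpow g b)).
      { apply (coset_same H y); auto.
        replace (ginv y ** gpow g a) with (ginv (ginv (gpow g a) ** y)). auto. rewrite inv_mul, inv_inv; auto.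
        replace (ginv y ** gpow g b) with (ginv (ginv (gpow g b) ** y)). auto. rewrite inv_mul, inv_inv; auto. }
      replace b with (a + (b - a)) in C |- * by lia. rewrite pow_diff in C.
      apply Hdivm in C. rewrite C, gpow_add, gpow_mul, Hxp, gpow_one, gmul1r. reflexivity. }
    assert (wd : forall a b y, H (ginv (gpow g a) ** y) -> H (ginv (gpow g b) ** y) ->
       gpow x a = gpow x b).
    { intros a b y A B. destruct (le_lt_dec a b). eauto. symmetry. apply (wd0 b a y); auto; lia. }
    set (d := fun y => proj1_sig (constructive_indefinite_description _ (Hall y))).
    assert (Hd : forall y, H (ginv (gpow g (d y)) ** y)).
    { intro y. unfold d. destruct (constructive_indefinite_description _ (Hall y)). exact h. }
    set (psi := fun y => gpow x (d y)).
    assert (Epsi : endo psi).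
    { intros y1 y2 _ _. unfold psi. rewrite <- gpow_add. apply (wd _ _ (y1 ** y2)); auto. }
    destruct (Hloc (fun _ => gone)) as [_ U].
    { intros a b _ _. symmetry; apply gmul1l. }
    assert (E := U psi (fun _ => gone) Epsi (fun _ _ _ _ => eq_sym (gmul1l _ gone))
      (fun y Hy => wd _ 0 y (Hd y) ltac:(simpl; rewrite inv_one, gmul1l; exact Hy))
      (fun _ _ => eq_refl) g).
    unfold psi in E. rewrite (wd _ 1 g (Hd g)) in E by (rewrite gpow1, gmulVl; auto).
    apply (Hxo 1); auto; lia.
Qed.

Theorem proposition4p1 (G : Group) (H : G -> Prop) (p : nat) :
  maximal_sub H -> simple_sub H -> nonabelian_sub H ->
  has_index H p -> (exists x : G, has_order x p) ->
  localization H -> simple_group G.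
Proof.
  intros Hmx [HS [Hnt Hsimp]] _ Hidx [x Hx] Hloc.
  pose proof HS as [H1 [HM HI]].
  split; [|split].
  - split; [|split]; auto.
  - destruct Hnt as [y [Hy ny]]. exists y; auto.
  - intros N HN. destruct (classic (forall y, N y -> y = gone)) as [T|NT]; [left; exact T|right].
    assert (Ex : exists n, N n /\ n <> gone).
    { apply NNPP. intro C. apply NT. intros y Ny. apply NNPP. intro ne. apply C. eauto. }
    pose proof HN as [NS [_ Nc]]. pose proof NS as [N1 [NM NI]].
    destruct (Hsimp (fun y => N y /\ H y)) as [A|B].
    + split; [|split].
      * split; [|split]; [split; auto| |]; intros; intuition.
      * intros y [_ Hy]; exact Hy.
      * intros k n Hk [Nn Hn]. split. apply Nc; auto. apply HM; auto.
    + exfalso. apply (caseA H N HS HN (fun y Ny Hy => A y (conj Ny Hy)) Ex Hmx Hloc).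
    + pose proof Hmx as [_ [_ Hmax]].
      destruct (Hmax N NS (fun y Hy => proj1 (B y Hy))) as [NH|Nall]; [|intros; apply Nall].
      exfalso. apply (caseB H p x HS); auto.
      intros g h Hh. apply NH. apply Nc; auto. apply B; auto.
Qed.
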